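(* Let $m\ge 1$ and $d_k\ge 1$ be integers, let $u\in\mathbb{R}^m$ with $\|u\|=1$, and let $g_1,\ldots,g_{d_k}\in\mathbb{R}^m$ be nonzero vectors such that no $g_i$ is colinear with $u$. Consider the problem $$\min_{V_1,\ldots,V_{d_k}\in\mathbb{R}^m}\ \sum_{i=1}^{d_k} V_i^T g_i \quad\text{subject to}\quad u^T\Big(\sum_{j=1}^{d_k} V_j\Big)=2-d_k,\qquad \|V_i\|=1\ \ (i=1,\ldots,d_k).$$ Let $\phi_i$ denote the angle between $g_i$ and $u$ (so $\cos\phi_i = g_i^Tu/\|g_i\|$). Then the Lagrangian dual function of this problem, obtained by dualizing the linear constraint $u^T\sum_j V_j = 2-d_k$ with a multiplier $\lambda\in\mathbb{R}$ (the norm constraints being kept), is $$h(\lambda) = -\sum_{i=1}^{d_k}\sqrt{\|g_i\|^2 + 2\lambda\|g_i\|\cos(\phi_i)+\lambda^2} + (d_k-2)\lambda .$$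
   Context: The Lagrangian used is $L(\lambda,V)=\sum_i V_i^Tg_i+\lambda\big(u^T\sum_j V_j + d_k-2\big)$ and the dual function is its minimum over the unit-norm vectors $V_i$. This problem is the block subproblem for one discrete variable $x_k$ with $d_k$ values in a low-rank SDP relaxation of a pairwise graphical model; $u$ plays the role of the fixed last row $V_{d+1}$ of the low-rank factor. $\|\cdot\|$ is the Euclidean norm. *)

(* Defs.v *)
From HB Require Import structures.
From mathcomp Require Import all_boot all_order all_algebra.
From mathcomp Require Import all_classical all_reals.
Set Implicit Arguments. Unset Strict Implicit. Unset Printing Implicit Defensive.
Import Order.TTheory GRing.Theory Num.Theory.
Local Open Scope ring_scope.
Local Open Scope classical_set_scope.

Definition dotv (R : realType) (m : nat) (x y : 'rV[R]_m) : R :=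
  \sum_(j < m) x 0 j * y 0 j.

Definition normv (R : realType) (m : nat) (x : 'rV[R]_m) : R :=
  Num.sqrt (dotv x x).

Definition colinear (R : realType) (m : nat) (x y : 'rV[R]_m) : Prop :=
  exists c : R, x = c *: y \/ y = c *: x.

Definition cos_angle (R : realType) (m : nat) (g u : 'rV[R]_m) : R :=
  dotv g u / (normv g * normv u).

Definition lagrangian (R : realType) (m d : nat) (g : 'I_d -> 'rV[R]_m)
  (u : 'rV[R]_m) (lam : R) (V : 'I_d -> 'rV[R]_m) : R :=
  \sum_(i < d) dotv (V i) (g i) + lam * (dotv u (\sum_(j < d) V j) + d%:R - 2).

Definition unit_family (R : realType) (m d : nat) (V : 'I_d -> 'rV[R]_m) : Prop :=
  forall i, normv (V i) = 1.

Definition dual_fun (R : realType) (m d : nat) (g : 'I_d -> 'rV[R]_m)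
  (u : 'rV[R]_m) (lam : R) : R :=
  inf [set lagrangian g u lam V | V in [set V | unit_family V]].

(* Main.v *)
Require Import Defs.
From HB Require Import structures.
From mathcomp Require Import all_boot all_order all_algebra.
From mathcomp Require Import all_classical all_reals.
From mathcomp Require Import ring lra.
Import Order.TTheory GRing.Theory Num.Theory.
Local Open Scope ring_scope.

Section Aux.
Context {R : realType} {m : nat}.
Implicit Types x y z : 'rV[R]_m.

Lemma dotvC x y : dotv x y = dotv y x.
Proof. by rewrite /dotv; apply: eq_bigr => j _; rewrite mulrC. Qed.

Lemma dotvDr x y z : dotv x (y + z) = dotv x y + dotv x z.
Proof. by rewrite /dotv -big_split; apply: eq_bigr => j _; rewrite mxE mulrDr. Qed.

Lemma dotvZr c x y : dotv x (c *: y) = c * dotv x y.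
Proof.
rewrite /dotv mulr_sumr; apply: eq_bigr => j _; rewrite mxE.
by rewrite mulrCA.
Qed.

Lemma dotvDl x y z : dotv (y + z) x = dotv y x + dotv z x.
Proof. by rewrite dotvC dotvDr ![dotv x _]dotvC. Qed.

Lemma dotvZl c x y : dotv (c *: y) x = c * dotv y x.
Proof. by rewrite dotvC dotvZr dotvC. Qed.

Lemma dotv_ge0 x : 0 <= dotv x x.
Proof. by apply: sumr_ge0 => j _; rewrite -expr2 sqr_ge0. Qed.

Lemma dotv_eq0 x : dotv x x = 0 -> x = 0.
Proof.
move=> /eqP; rewrite /dotv psumr_eq0; last by move=> j _; rewrite -expr2 sqr_ge0.
move=> /allP H; apply/matrixP => i j; rewrite mxE (ord1 i).
have := H j (mem_index_enum j); rewrite /= mulf_eq0 orbb => /eqP ->; by [].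
Qed.

Lemma normv_sq x : normv x ^+ 2 = dotv x x.
Proof. by rewrite /normv sqr_sqrtr // dotv_ge0. Qed.

Lemma normv_ge0 x : 0 <= normv x.
Proof. exact: sqrtr_ge0. Qed.

Lemma normv_gt0 x : x != 0 -> 0 < normv x.
Proof.
move=> hx; rewrite /normv sqrtr_gt0 lt_neqAle dotv_ge0 andbT.
by apply/eqP => h; move/eqP: hx; apply; apply: dotv_eq0.
Qed.

Lemma cs_unit (v w : 'rV[R]_m) : normv v = 1 -> w != 0 -> - normv w <= dotv v w.
Proof.
move=> hv hw; set n := normv w.
have hn : 0 < n by exact: normv_gt0.
have h0 := dotv_ge0 (n *: v + w).
rewrite dotvDl !dotvDr !dotvZl !dotvZr -!normv_sq hv (dotvC w v) in h0.
rewrite -/n in h0.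
have : 0 <= 2 * n * (n + dotv v w) by lra.
rewrite pmulr_rge0; first lra.
by rewrite mulr_gt0.
Qed.

End Aux.

Theorem theorem3 (R : realType) (m d : nat) (u : 'rV[R]_m) (g : 'I_d -> 'rV[R]_m)
  (hm : (1 <= m)%N) (hd : (1 <= d)%N) (hu : normv u = 1)
  (hg0 : forall i, g i != 0) (hgu : forall i, ~ colinear (g i) u) :
  forall lam : R,
    let h := - \sum_(i < d) Num.sqrt (normv (g i) ^+ 2
                 + 2 * lam * normv (g i) * cos_angle (g i) u + lam ^+ 2)
             + (d%:R - 2) * lam in
    dual_fun g u lam = h /\
    exists V : 'I_d -> 'rV[R]_m, unit_family V /\ lagrangian g u lam V = h.
Proof.
move=> lam h.
pose w i := g i + lam *: u.
have hw0 i : w i != 0.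
  apply/eqP => e; apply: (hgu i); exists (- lam); left.
  by rewrite scaleNr; apply/eqP; rewrite -subr_eq0 opprK; apply/eqP.
have hnw i : normv (w i) = Num.sqrt (normv (g i) ^+ 2
                 + 2 * lam * normv (g i) * cos_angle (g i) u + lam ^+ 2).
  rewrite {1}/normv /w dotvDl !dotvDr !dotvZl !dotvZr -(@normv_sq _ _ (g i)) -(@normv_sq _ _ u) hu.
  rewrite /cos_angle hu mulr1 (@dotvC _ _ u (g i)).
  have hg := normv_gt0 _ (hg0 i).
  congr Num.sqrt; field; lra.
have hL V : lagrangian g u lam V = \sum_(i < d) dotv (V i) (w i) + (d%:R - 2) * lam.
  rewrite /lagrangian /w.
  have -> : dotv u (\sum_(j < d) V j) = \sum_(j < d) dotv (V j) u.
    rewrite /dotv exchange_big /=; apply: eq_bigr => j _.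
    rewrite summxE mulr_sumr; apply: eq_bigr => i _; by rewrite mulrC.
  under [X in _ = X + _]eq_bigr => i _ do rewrite dotvDr dotvZr.
  rewrite big_split /= -mulr_sumr; lra.
have hh : h = - \sum_(i < d) normv (w i) + (d%:R - 2) * lam.
  by rewrite /h; congr (- _ + _); apply: eq_bigr => i _; rewrite hnw.
pose V0 i := (- (normv (w i))^-1) *: w i.
have hV0 : unit_family V0.
  move=> i; rewrite /normv /V0 dotvZl dotvZr -normv_sq.
  have hp := normv_gt0 _ (hw0 i).
  rewrite mulrA -expr2 sqrrN exprVn mulVf ?sqrtr1 //.
  by rewrite expf_neq0 // gt_eqF.
have hLV0 : lagrangian g u lam V0 = h.
  rewrite hL hh; congr (_ + _); rewrite -sumrN; apply: eq_bigr => i _.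
  rewrite /V0 dotvZl -normv_sq.
  have hp := normv_gt0 _ (hw0 i).
  by rewrite expr2 mulNr mulrA mulVf ?mul1r // gt_eqF.
have hlb : forall V, unit_family V -> h <= lagrangian g u lam V.
  move=> V hV; rewrite hL hh lerD2r -sumrN; apply: ler_sum => i _.
  exact: cs_unit.
split; last by exists V0.
rewrite /dual_fun; apply/le_anti/andP; split.
- have hlbd : has_lbound [set lagrangian g u lam V | V in [set V | unit_family V]].
    by exists h => _ [V hV <-]; apply: hlb.
  rewrite -hLV0; apply: (ge_inf hlbd); by exists V0.
- apply: lb_le_inf; first by exists h, V0.
  by move=> _ [V hV <-]; apply: hlb.
Qed.
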